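(* Let $G$ be a proper subdomain of $\mathbb{R}^n$, let $c\ge 1$, and let $x,y\in G$. Put $$W(x,y)=\log\Big(1+2c\sinh\frac{j_G(x,y)}{2}\Big),\quad L=\frac12+\frac{\log c}{1+j_G(x,y)},\quad U=\frac{j_G(x,y)+(2c+1)}{2(1+j_G(x,y))}.$$ Then $$L\,j_G(x,y)\le W(x,y)\le U\,j_G(x,y).$$
   Context: For $x\in G$, $d_G(x)=\operatorname{dist}(x,\partial G)$. The distance ratio metric is $j_G(x,y)=\log\Big(1+\frac{|x-y|}{\min\{d_G(x),d_G(y)\}}\Big)$ for $x,y\in G$. *)

(* Defs.v *)
(* R^n is modelled as 'rV[R]_n over an abstract
   R : realType, with the Euclidean norm defined explicitly below (the
   library's norm on 'rV is the max norm, which induces the same topology). *)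
From mathcomp Require Import all_boot all_order all_algebra.
From mathcomp Require Import all_classical all_reals all_analysis.
Set Implicit Arguments. Unset Strict Implicit. Unset Printing Implicit Defensive.
Import Order.TTheory GRing.Theory Num.Theory.
Import numFieldNormedType.Exports.
Local Open Scope classical_set_scope.
Local Open Scope ring_scope.

Definition enorm (R : realType) (n : nat) (v : 'rV[R]_n) : R :=
  Num.sqrt (\sum_(i < n) (v ord0 i) ^+ 2).

Definition boundary (R : realType) (n : nat) (G : set 'rV[R]_n) : set 'rV[R]_n :=
  closure G `\` interior G.

Definition dG (R : realType) (n : nat) (G : set 'rV[R]_n) (x : 'rV[R]_n) : R :=
  inf [set enorm (x - z) | z in boundary G].

Definition jG (R : realType) (n : nat) (G : set 'rV[R]_n) (x y : 'rV[R]_n) : R :=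
  ln (1 + enorm (x - y) / Num.min (dG G x) (dG G y)).

Definition sinh (R : realType) (t : R) : R := (expR t - expR (- t)) / 2.

Definition proper_subdomain (R : realType) (n : nat) (G : set 'rV[R]_n) : Prop :=
  G !=set0 /\ open G /\ connected G /\ G != setT.

(* Main.v *)
Require Import Defs.
From mathcomp Require Import all_boot all_order all_algebra.
From mathcomp Require Import all_classical all_reals all_analysis.
From mathcomp Require Import ring lra.
Import Order.TTheory GRing.Theory Num.Theory.
Import numFieldNormedType.Exports.
Local Open Scope classical_set_scope.
Local Open Scope ring_scope.

Lemma poly1 (R : realType) (t : R) : 0 <= t -> t <= 2 ->
  1 + t - t^+2 <= (1 - t/4)^+4 * (1+t)^+2.
Proof. move=> h0 h2. nra. Qed.

Lemma lnconc (R : realType) (a c : R) : 0 <= a -> a <= 1 -> 0 < c ->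
  a * ln c <= ln (a * c + (1 - a)).
Proof.
move=> a0 a1 c0.
have := @concave_ln R (Itv01 a0 a1) c 1 c0 ltr01.
rewrite !convRE /= ln1 mulr0 addr0 mulr1. by [].
Qed.

Lemma le_ln_of (R : realType) (z y : R) : 0 < y -> expR z <= y -> z <= ln y.
Proof. by move=> y0 h; rewrite -ler_expR lnK. Qed.

Lemma ln_le_of (R : realType) (z y : R) : 0 < y -> y <= expR z -> ln y <= z.
Proof. by move=> y0 h; rewrite -ler_expR lnK. Qed.

Lemma key (R : realType) (t c : R) : 0 <= t -> 1 <= c ->
  let S := (expR (t / 2) - expR (- (t / 2))) / 2 in
  (2^-1 + ln c / (1 + t)) * t <= ln (1 + 2 * c * S) /\
  ln (1 + 2 * c * S) <= (t + (2 * c + 1)) / (2 * (1 + t)) * t.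
Proof.
move=> t0 c1; cbv zeta.
set E := expR (t / 2).
have E0 : 0 < E by apply: expR_gt0.
have E1 : 1 + t / 2 <= E by apply: expR_ge1Dx.
have EE : E * E = expR t by rewrite -expRD; congr expR; field.
have Et : 1 + t <= E * E by rewrite EE; apply: expR_ge1Dx.
have Ei : E * (expR (- (t / 2))) = 1 by rewrite -expRD subrr expR0.
set iE := expR (- (t / 2)) in Ei *.
have iE0 : 0 < iE by apply: expR_gt0.
have iE1 : 1 - t / 2 <= iE by apply: expR_ge1Dx.
have t1 : 0 < 1 + t by lra.
have -> : 1 + 2 * c * ((E - iE) / 2) = 1 + c * (E - iE) by field.
set a := t / (1 + t).
have at1 : a * (1 + t) = t by rewrite /a; field; lra.
have a0 : 0 <= a by rewrite /a divr_ge0 //; lra.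
have a1 : a <= 1 by rewrite /a ler_pdivrMr //; lra.
have EiE : iE <= E by nra.
have Y0 : 0 < 1 + c * (E - iE) by nra.
split.
- have -> : (2^-1 + ln c / (1 + t)) * t = t / 2 + a * ln c.
    by rewrite /a; field; lra.
  apply: le_ln_of => //.
  rewrite expRD -/E.
  have c0 : 0 < c by lra.
  have h1 : expR (a * ln c) <= a * c + (1 - a).
    have y0 : 0 < a * c + (1 - a) by nra.
    rewrite -[X in _ <= X](lnK y0) ler_expR; exact: lnconc.
  have h2 : 1 <= E * E * (1 - a) by nra.
  have h3 : 0 <= E - iE - a * E.
    have : 0 <= E * (E - iE - a * E) by nra.
    by rewrite pmulr_rge0.
  have h4 : E * expR (a * ln c) <= E * (a * c + (1 - a)) by rewrite ler_pM2l.
  have h5 : 0 <= (c - 1) * (E - iE - a * E) by nra.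
  have h6 : 0 <= 1 - iE by nra.
  nra.
- have -> : (t + (2 * c + 1)) / (2 * (1 + t)) * t = t / 2 + a + (c - 1) * a.
    by rewrite /a; field; lra.
  apply: ln_le_of => //.
  rewrite !expRD -/E.
  set F := expR a; set G := expR ((c - 1) * a).
  have F1 : 1 + a <= F by apply: expR_ge1Dx.
  have G1 : 1 + (c - 1) * a <= G by apply: expR_ge1Dx.
  set q := expR (- (t / 4)).
  have q1 : 1 - t / 4 <= q by apply: expR_ge1Dx.
  have qq : q * q = iE by rewrite -expRD; congr expR; field.
  have b1 : 1 + E - iE <= E * (1 + a).
    have : t / 2 * (1 + t) <= a * E * (1 + t) by rewrite [a * E * _]mulrAC at1; nra.
    rewrite ler_pM2r // => aE.
    lra.
  have p2 : E * E * (1 + t - t ^+ 2) <= (1 + t) ^+ 2.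
    have [hn|hp] := lerP (1 + t - t ^+ 2) 0.
      have : 0 <= (1 + t) ^+ 2 by apply: sqr_ge0.
      have : E * E * (1 + t - t ^+ 2) <= 0 by rewrite pmulr_rle0 //; nra.
      lra.
    have t2 : t <= 2 by nra.
    have P := @poly1 R t t0 t2.
    have p0 : 0 <= 1 - t / 4 by lra.
    have pq2 : (1 - t / 4) * (1 - t / 4) <= q * q by nra.
    have pq4 : (1 - t/4) ^+ 4 <= (q * q) * (q * q).
      have -> : (1 - t/4) ^+ 4 = ((1 - t / 4) * (1 - t / 4)) * ((1 - t / 4) * (1 - t / 4)) by ring.
      have : 0 <= (1 - t / 4) * (1 - t / 4) by nra.
      nra.
    have h : 1 + t - t ^+ 2 <= (q * q) * (q * q) * (1 + t) ^+ 2.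
      have : 0 <= (1 + t) ^+ 2 by apply: sqr_ge0.
      nra.
    rewrite qq in h.
    have EE0 : 0 < E * E by nra.
    have : E * E * (1 + t - t ^+ 2) <= E * E * (iE * iE * (1 + t) ^+ 2) by rewrite ler_pM2l.
    have -> : E * E * (iE * iE * (1 + t) ^+ 2) = (E * iE) * (E * iE) * (1 + t) ^+ 2 by ring.
    by rewrite Ei !mul1r.
  have b2 : E * E - 1 <= a * (1 + a) * E * E.
    rewrite -subr_ge0.
    have -> : a * (1 + a) * E * E - (E * E - 1) =
      (t * (1 + 2 * t) * E * E - (E * E - 1) * (1 + t) ^+ 2) / (1 + t) ^+ 2.
      by rewrite /a; field; lra.
    apply: divr_ge0; last by apply: sqr_ge0.
    rewrite subr_ge0. nra.
  have b3 : E - iE <= a * (1 + a) * E.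
    rewrite -subr_ge0.
    have : 0 <= E * (a * (1 + a) * E - (E - iE)) by nra.
    by rewrite pmulr_rge0.
  have EF : E * (1 + a) <= E * F by rewrite ler_pM2l.
  have EF0 : 0 <= E * F by nra.
  have h1 : E * F * (1 + (c - 1) * a) <= E * F * G by rewrite ler_wpM2l.
  have h2 : 0 <= (c - 1) * a by nra.
  have h3 : (c - 1) * (a * (1 + a) * E) <= (c - 1) * a * (E * F).
    have -> : (c - 1) * (a * (1 + a) * E) = (c - 1) * a * (E * (1 + a)) by ring.
    by rewrite ler_wpM2l.
  have h4 : (c - 1) * (E - iE) <= (c - 1) * (a * (1 + a) * E) by rewrite ler_wpM2l //; lra.
  nra.
Qed.

Lemma dG_ge0 (R : realType) (n : nat) (G : set 'rV[R]_n) (x : 'rV[R]_n) :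
  0 <= dG G x.
Proof.
rewrite /dG.
set S := [set enorm (x - z) | z in boundary G].
have [->|ne] := eqVneq S set0; first by rewrite inf0.
apply: lb_le_inf; first by apply/set0P.
by move=> _ [z _ <-]; rewrite /enorm sqrtr_ge0.
Qed.

Lemma jG_ge0 (R : realType) (n : nat) (G : set 'rV[R]_n) (x y : 'rV[R]_n) :
  0 <= jG G x y.
Proof.
rewrite /jG; apply: ln_ge0.
rewrite lerDl; apply: divr_ge0; first by rewrite /enorm sqrtr_ge0.
by rewrite le_min !dG_ge0.
Qed.

Theorem theorem3p10 (R : realType) (n : nat) (G : set 'rV[R]_n) (c : R)
  (x y : 'rV[R]_n) :
  proper_subdomain G -> 1 <= c -> x \in G -> y \in G ->
  let j := jG G x y in
  let W := ln (1 + 2 * c * sinh (j / 2)) in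
  let L := 2^-1 + ln c / (1 + j) in
  let U := (j + (2 * c + 1)) / (2 * (1 + j)) in
  L * j <= W /\ W <= U * j.
Proof.
move=> _ c1 _ _ j W L U.
have := @key R _ c (@jG_ge0 R n G x y) c1; rewrite /W /L /U /j /sinh /=; exact.
Qed.
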